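(* For all formulas $q_1,\dots,q_n,q\in F(V)$: if $q_1,\dots,q_n\vdash_{\mathrm{sq}\L^*}q$, then $q_1,\dots,q_n\vDash_{\mathbb{SQW^*}}q$.
   Context: Let $V$ be a set of propositional variables and $F(V)$ the set of formulas built from $V$ and the constant $1$ using $\to$ and $\neg$. Abbreviations: $p^+:=(p\to 1)\to 1$, $p^-:=(p\to\neg 1)\to\neg 1$ (binding more tightly than $\neg$), $p\vee q:=((p^+\to q^+)^+\to(\neg p)^-)\to((q^-\to p^-)^-\to p^-)$; an axiom ''$p\leftrightarrow q$'' stands for the two axioms $p\to q$ and $q\to p$. The logic $\mathrm{sq}\L^*$ has axiom schemas (for all $p,q,r\in F(V)$): (Q1) $(p\to q)\leftrightarrow(\neg q\to\neg p)$; (Q2) $1\leftrightarrow((1\to p)\to 1)$; (Q3) $p\leftrightarrow((q\to q)\to p)$; (Q4) $(p\to q)\leftrightarrow((q^+\to p^-)\to(p^+\to q^-))$; (Q5) $\neg(p\to q)\leftrightarrow(q\to p)$; (Q6) $(p\to(\neg p\to q))^+\leftrightarrow(p^+\to(\neg p^+\to q^+))$; (Q7) $(p\to(q\vee r))\leftrightarrow((p\to r)\vee(p\to q))$; (Q8) $(p\vee(q\vee r))\leftrightarrow((p\vee q)\vee r)$; (Q9) $((p\to 1)\to((q\to 1)\to r))\to((q\to 1)\to((p\to 1)\to r))$; (Q10) $p\to 1$; and rules: (qMP) from $(r\to r)\to p$ and $(r\to r)\to(p\to q)$ infer $(r\to r)\to q$; (Reg) from $p$ infer $(r\to r)\to p$;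 (AReg1) from $(r\to r)\to(p\to q)$ infer $p\to q$; (AReg2) from $(r\to r)\to\neg(p\to q)$ infer $\neg(p\to q)$; (AReg3) from $(r\to r)\to\neg 1$ infer $\neg 1$; (AReg4) from $(r\to r)\to 1$ infer $1$; (Inv1) from $p$ infer $\neg\neg p$; (Inv2) from $\neg\neg p$ infer $p$; (Flat) from $p$ and $\neg 1$ infer $\neg p$; (R2$'$) from $p\to q$ and $r\to t$ infer $(q\to r)\to(p\to t)$; (R3$'$) from $(r\to r)\to p$ infer $p^-$. $q_1,\dots,q_n\vdash_{\mathrm{sq}\L^*}q$ means there is a finite sequence ending with $q$ whose members are axiom instances, among $q_1,\dots,q_n$, or follow from earlier members by rules. Semantics: a quasi-Wajsberg* algebra is an algebra $\langle W;\to,\neg,{}^+,{}^-,1\rangle$ of type $\langle 2,1,1,1,0\rangle$ such that for all $x,y,z$: $x\to y=\neg y\to\neg x$; $(x\to 1)\to((y\to 1)\to z)=(y\to 1)\to((x\to 1)\to z)$; $(1\to x)\to 1=1$; $(z\to z)\to(x\to y)=x\to y$; $(1\to 1)\to x^{+}=((1\to 1)\to x)^{+}=(x\to 1)\to 1$ and $(1\to 1)\to x^{-}=((1\to 1)\to x)^{-}=(x\to\neg 1)\to\neg 1$; $x\to y=(y^{+}\to x^{-})\to(x^{+}\to y^{-})$; $\neg(x\to y)=y\to x$; $\neg\neg x=x$; $(x\to(\neg x\to y))^{+}=x^{+}\to(\neg x^{+}\to y^{+})$; $x\vee y=y\vee x$; $x\vee(y\vee z)=(x\vee y)\vee z$;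 $x\to(y\vee z)=(x\to y)\vee(x\to z)$, with $x\vee y:=((x^{+}\to y^{+})^{+}\to(\neg x)^{-})\to((y^{-}\to x^{-})^{-}\to x^{-})$. A strong quasi-Wajsberg* algebra additionally satisfies $x^+=(1\to 1)\to x^+$ and $x^-=(1\to 1)\to x^-$; $\mathbb{SQW^*}$ is the class of these. An element $d$ of such an algebra $\mathbf{A}$ is designated if $d=(c\to 1)\to 1$ for some $c\in A$. $q_1,\dots,q_n\vDash_{\mathbb{SQW^*}}q$ means: for every $\mathbf{A}\in\mathbb{SQW^*}$ and every assignment of the variables in $A$, if the values of $q_1,\dots,q_n$ are all designated then the value of $q$ is designated. *)

(* Defs.v *)
From Stdlib Require Import List.
Import ListNotations.
Set Implicit Arguments.

Inductive form (V : Type) : Type :=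
| FVar : V -> form V
| FOne : form V
| FImp : form V -> form V -> form V
| FNeg : form V -> form V.
Arguments FOne {V}.

Section Syntax.
Variable V : Type.
Local Notation "p --> q" := (FImp p q) (at level 55, right associativity).

Definition fplus (p : form V) : form V := (p --> FOne) --> FOne.
Definition fminus (p : form V) : form V := (p --> FNeg FOne) --> FNeg FOne.
Definition fjoin (p q : form V) : form V :=
  (fplus (fplus p --> fplus q) --> fminus (FNeg p)) -->
  (fminus (fminus q --> fminus p) --> fminus p).

(* an axiom "p <-> q" stands for the two axioms p -> q and q -> p *)
Definition biax (p q : form V) (c : form V) : Prop := c = (p --> q) \/ c = (q --> p).

Definition sqL_axiom (c : form V) : Prop :=
  exists p q r : form V,
     biax (p --> q) (FNeg q --> FNeg p) c
  \/ biax FOne ((FOne --> p) --> FOne) c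
  \/ biax p ((q --> q) --> p) c
  \/ biax (p --> q) ((fplus q --> fminus p) --> (fplus p --> fminus q)) c
  \/ biax (FNeg (p --> q)) (q --> p) c
  \/ biax (fplus (p --> (FNeg p --> q)))
          (fplus p --> (FNeg (fplus p) --> fplus q)) c
  \/ biax (p --> fjoin q r) (fjoin (p --> r) (p --> q)) c
  \/ biax (fjoin p (fjoin q r)) (fjoin (fjoin p q) r) c
  \/ c = (((p --> FOne) --> ((q --> FOne) --> r)) -->
          ((q --> FOne) --> ((p --> FOne) --> r)))
  \/ c = (p --> FOne).

Inductive sqL_rule : list (form V) -> form V -> Prop :=
| R_qMP : forall p q r,
    sqL_rule [(r --> r) --> p; (r --> r) --> (p --> q)] ((r --> r) --> q)
| R_Reg : forall p r, sqL_rule [p] ((r --> r) --> p)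
| R_AReg1 : forall p q r, sqL_rule [(r --> r) --> (p --> q)] (p --> q)
| R_AReg2 : forall p q r,
    sqL_rule [(r --> r) --> FNeg (p --> q)] (FNeg (p --> q))
| R_AReg3 : forall r, sqL_rule [(r --> r) --> FNeg FOne] (FNeg FOne)
| R_AReg4 : forall r, sqL_rule [(r --> r) --> FOne] FOne
| R_Inv1 : forall p, sqL_rule [p] (FNeg (FNeg p))
| R_Inv2 : forall p, sqL_rule [FNeg (FNeg p)] p
| R_Flat : forall p, sqL_rule [p; FNeg FOne] (FNeg p)
| R_R2' : forall p q r t,
    sqL_rule [p --> q; r --> t] ((q --> r) --> (p --> t))
| R_R3' : forall p r, sqL_rule [(r --> r) --> p] (fminus p).

Definition justified (hyps prev : list (form V)) (c : form V) : Prop :=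
  sqL_axiom c \/ In c hyps \/
  exists ps, sqL_rule ps c /\ (forall x, In x ps -> In x prev).

Definition sqL_derivation (hyps l : list (form V)) : Prop :=
  forall i d, i < length l -> justified hyps (firstn i l) (nth i l d).

Definition sqL_derives (hyps : list (form V)) (q : form V) : Prop :=
  exists l, l <> [] /\ sqL_derivation hyps l /\ last l q = q.
End Syntax.

Record SQWalg : Type := {
  car :> Type;
  aimp : car -> car -> car;
  aneg : car -> car;
  aplus : car -> car;
  aminus : car -> car;
  aone : car;
}.

Section Alg.
Variable A : SQWalg.
Local Notation "x --> y" := (aimp A x y) (at level 55, right associativity).
Local Notation "1" := (aone A).
Local Notation "'N' x" := (aneg A x) (at level 35, right associativity).
Local Notation "x ^+" := (aplus A x) (at level 2, format "x ^+").
Local Notation "x ^-" := (aminus A x) (at level 2, format "x ^-").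

Definition ajoin (x y : A) : A :=
  ((x^+ --> y^+)^+ --> (N x)^-) --> ((y^- --> x^-)^- --> x^-).

Definition is_qWstar : Prop :=
  (forall x y : A, (x --> y) = (N y --> N x)) /\
  (forall x y z : A, ((x --> 1) --> ((y --> 1) --> z)) = ((y --> 1) --> ((x --> 1) --> z))) /\
  (forall x : A, ((1 --> x) --> 1) = 1) /\
  (forall x y z : A, ((z --> z) --> (x --> y)) = (x --> y)) /\
  (forall x : A, ((1 --> 1) --> x^+) = ((1 --> 1) --> x)^+ /\
                 ((1 --> 1) --> x)^+ = ((x --> 1) --> 1)) /\
  (forall x : A, ((1 --> 1) --> x^-) = ((1 --> 1) --> x)^- /\
                 ((1 --> 1) --> x)^- = ((x --> N 1) --> N 1)) /\
  (forall x y : A, (x --> y) = ((y^+ --> x^-) --> (x^+ --> y^-))) /\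
  (forall x y : A, N (x --> y) = (y --> x)) /\
  (forall x : A, N N x = x) /\
  (forall x y : A, (x --> (N x --> y))^+ = (x^+ --> (N (x^+) --> y^+))) /\
  (forall x y : A, ajoin x y = ajoin y x) /\
  (forall x y z : A, ajoin x (ajoin y z) = ajoin (ajoin x y) z) /\
  (forall x y z : A, (x --> ajoin y z) = ajoin (x --> y) (x --> z)).

Definition is_SQWstar : Prop :=
  is_qWstar /\
  (forall x : A, x^+ = ((1 --> 1) --> x^+)) /\
  (forall x : A, x^- = ((1 --> 1) --> x^-)).

Definition designated (d : A) : Prop := exists c : A, d = ((c --> 1) --> 1).

Fixpoint eval (V : Type) (e : V -> A) (p : form V) : A :=
  match p with
  | FVar v => e v
  | FOne => 1
  | FImp p q => eval e p --> eval e q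
  | FNeg p => N eval e p
  end.
End Alg.

Definition SQW_entails (V : Type) (hyps : list (form V)) (q : form V) : Prop :=
  forall (A : SQWalg), is_SQWstar A ->
  forall e : V -> A,
    (forall h, In h hyps -> designated A (eval A e h)) ->
    designated A (eval A e q).

(* Main.v *)
Require Import Defs.
From Stdlib Require Import List Arith Lia.
Import ListNotations.

Section Alg.
Variable A : SQWalg.
Hypothesis HA : is_SQWstar A.

Local Notation I := (aimp A).
Local Notation N := (aneg A).
Local Notation one := (aone A).
Local Notation e := (aimp A (aone A) (aone A)).
Local Notation P x := (aimp A (aimp A x (aone A)) (aone A)).
Local Notation M x := (aimp A (aimp A x (aneg A (aone A))) (aneg A (aone A))).
Local Notation J x y := (ajoin A x y).

Lemma plusE : forall x, aplus A x = P x.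
Proof.
  destruct HA as [Hq [Hs1 Hs2]].
  destruct Hq as [_ [_ [_ [_ [H5 _]]]]].
  intro x. rewrite Hs1. destruct (H5 x) as [H5a H5b]. rewrite H5a. exact H5b.
Qed.
Lemma minusE : forall x, aminus A x = M x.
Proof.
  destruct HA as [Hq [Hs1 Hs2]].
  destruct Hq as [_ [_ [_ [_ [_ [H6 _]]]]]].
  intro x. rewrite Hs2. destruct (H6 x) as [H6a H6b]. rewrite H6a. exact H6b.
Qed.
Lemma joinE : forall x y, ajoin A x y =
  I (I (P (I (P x) (P y))) (M (N x))) (I (M (I (M y) (M x))) (M x)).
Proof. intros. unfold ajoin. rewrite !plusE, !minusE. reflexivity. Qed.


Lemma De : I one one = e. Proof. reflexivity. Qed.
Lemma DP : forall x0 : A, I (I x0 one) one = P x0. Proof. reflexivity. Qed.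
Lemma DM : forall x0 : A, I (I x0 (N one)) (N one) = M x0. Proof. reflexivity. Qed.
Lemma DJ : forall x0 x1 : A, I (I (P (I (P x0) (P x1))) (M (N x0))) (I (M (I (M x1) (M x0))) (M x0)) = J x0 x1.
Proof. intros. symmetry. apply joinE. Qed.

Ltac hx := destruct HA as [[h1 [h2 [h3 [h4 [h5 [h6 [h7 [h8 [h9 [h10 [h11 [h12 h13]]]]]]]]]]]] [s1 s2]].

Lemma A1 : forall x0 x1 : A, I x0 x1 = I (N x1) (N x0).
Proof. hx. exact h1. Qed.
Lemma A2 : forall x0 x1 x2 : A, I (I x0 one) (I (I x1 one) x2) = I (I x1 one) (I (I x0 one) x2).
Proof. hx. exact h2. Qed.
Lemma A3 : forall x0 : A, I (I one x0) one = one.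
Proof. hx. exact h3. Qed.
Lemma A4 : forall x0 x1 x2 : A, I (I x2 x2) (I x0 x1) = I x0 x1.
Proof. hx. intros. apply h4. Qed.
Lemma A5a : forall x0 : A, I e (P x0) = P x0.
Proof. intros. rewrite <- plusE. hx. symmetry. apply s1. Qed.
Lemma A5b : forall x0 : A, P (I e x0) = P x0.
Proof. intros. rewrite <- plusE. hx. exact (proj2 (h5 x0)). Qed.
Lemma A6a : forall x0 : A, I e (M x0) = M x0.
Proof. intros. rewrite <- minusE. hx. symmetry. apply s2. Qed.
Lemma A6b : forall x0 : A, M (I e x0) = M x0.
Proof. intros. rewrite <- minusE. hx. exact (proj2 (h6 x0)). Qed.
Lemma A7 : forall x0 x1 : A, I x0 x1 = I (I (P x1) (M x0)) (I (P x0) (M x1)).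
Proof. intros. rewrite <- !plusE, <- !minusE. hx. apply h7. Qed.
Lemma A8 : forall x0 x1 : A, N (I x0 x1) = I x1 x0.
Proof. hx. exact h8. Qed.
Lemma A9 : forall x0 : A, N (N x0) = x0.
Proof. hx. exact h9. Qed.
Lemma A10 : forall x0 x1 : A, P (I x0 (I (N x0) x1)) = I (P x0) (I (N (P x0)) (P x1)).
Proof. intros. rewrite <- !plusE. hx. apply h10. Qed.
Lemma A11 : forall x0 x1 : A, J x0 x1 = J x1 x0.
Proof. hx. exact h11. Qed.
Lemma A12 : forall x0 x1 x2 : A, J x0 (J x1 x2) = J (J x0 x1) x2.
Proof. hx. exact h12. Qed.
Lemma A13 : forall x0 x1 x2 : A, I x0 (J x1 x2) = J (I x0 x1) (I x0 x2).
Proof. hx. exact h13. Qed.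
Lemma L_qq_34 (c_a : A) : (N e) = (I one one).
Proof.
  refine (eq_trans (f_equal (fun Z => (N Z)) (eq_sym De)) _).
  refine (eq_trans (A8 one one) _).
  reflexivity.
Qed.

Lemma L_qq_42 (c_a : A) : (N e) = e.
Proof.
  refine (eq_trans (L_qq_34 c_a) _).
  refine (eq_trans De _).
  reflexivity.
Qed.

Lemma L_qq_639 (c_a : A) : forall x0 x1 : A, (I e (I x0 x1)) = (I x0 x1).
Proof.
  intros x0 x1.
  refine (eq_trans (f_equal (fun Z => (I Z (I x0 x1))) (eq_sym De)) _).
  refine (eq_trans (A4 x0 x1 one) _).
  reflexivity.
Qed.

Lemma L_qq_640 (c_a : A) : forall x0 : A, (I (I x0 x0) e) = (I one one).
Proof.
  intros x0.
  refine (eq_trans (f_equal (fun Z => (I (I x0 x0) Z)) (eq_sym De)) _).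
  refine (eq_trans (A4 one one x0) _).
  reflexivity.
Qed.

Lemma L_qq_680 (c_a : A) : forall x0 x1 : A, (I e (I x0 x1)) = (I x0 x1).
Proof.
  intros x0 x1.
  refine (eq_trans ((L_qq_639 c_a) x0 x1) _).
  reflexivity.
Qed.

Lemma L_qq_713 (c_a : A) : forall x0 : A, (I (I x0 x0) e) = e.
Proof.
  intros x0.
  refine (eq_trans ((L_qq_640 c_a) x0) _).
  refine (eq_trans De _).
  reflexivity.
Qed.

Lemma L_qq_720 (c_a : A) : forall x0 : A, (N e) = (I e (I x0 x0)).
Proof.
  intros x0.
  refine (eq_trans (f_equal (fun Z => (N Z)) (eq_sym ((L_qq_713 c_a) x0))) _).
  refine (eq_trans (A8 (I x0 x0) e) _).
  reflexivity.
Qed.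

Lemma L_qq_727 (c_a : A) : forall x0 : A, e = (I x0 x0).
Proof.
  intros x0.
  refine (eq_trans (eq_sym (L_qq_42 c_a)) _).
  refine (eq_trans ((L_qq_720 c_a) x0) _).
  refine (eq_trans ((L_qq_680 c_a) x0 x0) _).
  reflexivity.
Qed.

Lemma L_qq (c_a : A) : (I c_a c_a) = e.
Proof.
  refine (eq_trans (eq_sym ((L_qq_727 c_a) c_a)) _).
  reflexivity.
Qed.

Lemma L_qq_f : forall x0 : A, (I x0 x0) = e.
Proof. intros; exact (L_qq x0). Qed.

Lemma L_PP_20 (c_a : A) : (I e one) = one.
Proof.
  refine (eq_trans (f_equal (fun Z => (I Z one)) (eq_sym (L_qq one))) _).
  refine (eq_trans (A3 one) _).
  reflexivity.
Qed.

Lemma L_PP_21 (c_a : A) : (I e one) = one.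
Proof.
  refine (eq_trans (L_PP_20 c_a) _).
  reflexivity.
Qed.

Lemma L_PP_25 (c_a : A) : one = (P one).
Proof.
  refine (eq_trans (eq_sym (A3 one)) _).
  refine (eq_trans (DP one) _).
  reflexivity.
Qed.

Lemma L_PP_30 (c_a : A) : one = (P one).
Proof.
  refine (eq_trans (L_PP_25 c_a) _).
  reflexivity.
Qed.

Lemma L_PP_35 (c_a : A) : forall x0 : A, (N one) = (I one (I one x0)).
Proof.
  intros x0.
  refine (eq_trans (f_equal (fun Z => (N Z)) (eq_sym (A3 x0))) _).
  refine (eq_trans (A8 (I one x0) one) _).
  reflexivity.
Qed.

Lemma L_PP_36 (c_a : A) : (N one) = (I one e).
Proof.
  refine (eq_trans (f_equal (fun Z => (N Z)) (eq_sym (L_PP_21 c_a))) _).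
  refine (eq_trans (A8 e one) _).
  reflexivity.
Qed.

Lemma L_PP_37 (c_a : A) : forall x0 : A, (N (P x0)) = (I (P x0) e).
Proof.
  intros x0.
  refine (eq_trans (f_equal (fun Z => (N Z)) (eq_sym (A5a x0))) _).
  refine (eq_trans (A8 e (P x0)) _).
  reflexivity.
Qed.

Lemma L_PP_43 (c_a : A) : (N one) = (I one e).
Proof.
  refine (eq_trans (L_PP_36 c_a) _).
  reflexivity.
Qed.

Lemma L_PP_44 (c_a : A) : (I (N one) one) = one.
Proof.
  refine (eq_trans (f_equal (fun Z => (I Z one)) (L_PP_43 c_a)) _).
  refine (eq_trans (A3 e) _).
  reflexivity.
Qed.

Lemma L_PP_46 (c_a : A) : (I (N one) one) = one.
Proof.
  refine (eq_trans (L_PP_44 c_a) _).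
  reflexivity.
Qed.

Lemma L_PP_59 (c_a : A) : forall x0 : A, (N one) = (I one (I one x0)).
Proof.
  intros x0.
  refine (eq_trans ((L_PP_35 c_a) x0) _).
  reflexivity.
Qed.

Lemma L_PP_67 (c_a : A) : forall x0 : A, (N (P x0)) = (I (P x0) e).
Proof.
  intros x0.
  refine (eq_trans ((L_PP_37 c_a) x0) _).
  reflexivity.
Qed.

Lemma L_PP_77 (c_a : A) : forall x0 x1 : A, (I x0 (N x1)) = (I x1 (N x0)).
Proof.
  intros x0 x1.
  refine (eq_trans (f_equal (fun Z => (I Z (N x1))) (eq_sym (A9 x0))) _).
  refine (eq_trans (eq_sym (A1 x1 (N x0))) _).
  reflexivity.
Qed.

Lemma L_PP_173 (c_a : A) : forall x0 x1 : A, (I x0 (N x1)) = (I x1 (N x0)).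
Proof.
  intros x0 x1.
  refine (eq_trans ((L_PP_77 c_a) x0 x1) _).
  reflexivity.
Qed.

Lemma L_PP_311 (c_a : A) : forall x0 : A, (I one (I (N one) x0)) = (M x0).
Proof.
  intros x0.
  refine (eq_trans (f_equal (fun Z => (I one Z)) (eq_sym (A8 x0 (N one)))) _).
  refine (eq_trans (eq_sym ((L_PP_173 c_a) (I x0 (N one)) one)) _).
  refine (eq_trans (DM x0) _).
  reflexivity.
Qed.

Lemma L_PP_313 (c_a : A) : (I one one) = (M one).
Proof.
  refine (eq_trans (f_equal (fun Z => (I one Z)) (eq_sym (L_PP_46 c_a))) _).
  refine (eq_trans ((L_PP_311 c_a) one) _).
  reflexivity.
Qed.

Lemma L_PP_327 (c_a : A) : forall x0 : A, (I one (M x0)) = (N one).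
Proof.
  intros x0.
  refine (eq_trans (f_equal (fun Z => (I one Z)) (eq_sym ((L_PP_311 c_a) x0))) _).
  refine (eq_trans (eq_sym ((L_PP_59 c_a) (I (N one) x0))) _).
  reflexivity.
Qed.

Lemma L_PP_339 (c_a : A) : e = (M one).
Proof.
  refine (eq_trans (eq_sym (L_qq one)) _).
  refine (eq_trans (L_PP_313 c_a) _).
  reflexivity.
Qed.

Lemma L_PP_376 (c_a : A) : forall x0 : A, (I one (M x0)) = (N one).
Proof.
  intros x0.
  refine (eq_trans ((L_PP_327 c_a) x0) _).
  reflexivity.
Qed.

Lemma L_PP_168638 (c_a : A) : forall x0 : A, (I (I one (M x0)) (I (P x0) (M one))) = (I x0 one).
Proof.
  intros x0.
  refine (eq_trans (f_equal (fun Z => (I (I Z (M x0)) (I (P x0) (M one)))) (L_PP_30 c_a)) _).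
  refine (eq_trans (eq_sym (A7 x0 one)) _).
  reflexivity.
Qed.

Lemma L_PP_169668 (c_a : A) : forall x0 : A, (I (P x0) one) = (I x0 one).
Proof.
  intros x0.
  refine (eq_trans (A1 (P x0) one) _).
  refine (eq_trans (f_equal (fun Z => (I (N one) Z)) ((L_PP_67 c_a) x0)) _).
  refine (eq_trans (f_equal (fun Z => (I (N one) (I (P x0) Z))) (L_PP_339 c_a)) _).
  refine (eq_trans (f_equal (fun Z => (I Z (I (P x0) (M one)))) (eq_sym ((L_PP_376 c_a) x0))) _).
  refine (eq_trans ((L_PP_168638 c_a) x0) _).
  reflexivity.
Qed.

Lemma L_PP_169956 (c_a : A) : forall x0 : A, (I (I x0 one) one) = (P (P x0)).
Proof.
  intros x0.
  refine (eq_trans (f_equal (fun Z => (I Z one)) (eq_sym ((L_PP_169668 c_a) x0))) _).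
  refine (eq_trans (DP (P x0)) _).
  reflexivity.
Qed.

Lemma L_PP_170009 (c_a : A) : forall x0 : A, (P x0) = (P (P x0)).
Proof.
  intros x0.
  refine (eq_trans (eq_sym (DP x0)) _).
  refine (eq_trans ((L_PP_169956 c_a) x0) _).
  reflexivity.
Qed.

Lemma L_PP (c_a : A) : (P (P c_a)) = (P c_a).
Proof.
  refine (eq_trans (eq_sym ((L_PP_170009 c_a) c_a)) _).
  reflexivity.
Qed.

Lemma L_PP_f : forall x0 : A, (P (P x0)) = (P x0).
Proof. intros; exact (L_PP x0). Qed.

Lemma L_P1_170371 (c_a : A) : (I e one) = one.
Proof.
  refine (eq_trans (f_equal (fun Z => (I Z one)) (eq_sym (L_qq one))) _).
  refine (eq_trans (A3 one) _).
  reflexivity.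
Qed.

Lemma L_P1_170372 (c_a : A) : (I e one) = one.
Proof.
  refine (eq_trans (L_P1_170371 c_a) _).
  reflexivity.
Qed.

Lemma L_P1_170378 (c_a : A) : one = (P one).
Proof.
  refine (eq_trans (eq_sym (A3 one)) _).
  refine (eq_trans (DP one) _).
  reflexivity.
Qed.

Lemma L_P1_170381 (c_a : A) : forall x0 : A, (I (P x0) one) = (P (I x0 one)).
Proof.
  intros x0.
  refine (eq_trans (f_equal (fun Z => (I Z one)) (eq_sym (DP x0))) _).
  refine (eq_trans (DP (I x0 one)) _).
  reflexivity.
Qed.

Lemma L_P1_170383 (c_a : A) : one = (P one).
Proof.
  refine (eq_trans (L_P1_170378 c_a) _).
  reflexivity.
Qed.

Lemma L_P1_170388 (c_a : A) : forall x0 : A, (N one) = (I one (I one x0)).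
Proof.
  intros x0.
  refine (eq_trans (f_equal (fun Z => (N Z)) (eq_sym (A3 x0))) _).
  refine (eq_trans (A8 (I one x0) one) _).
  reflexivity.
Qed.

Lemma L_P1_170389 (c_a : A) : (N one) = (I one e).
Proof.
  refine (eq_trans (f_equal (fun Z => (N Z)) (eq_sym (L_P1_170372 c_a))) _).
  refine (eq_trans (A8 e one) _).
  reflexivity.
Qed.

Lemma L_P1_170390 (c_a : A) : forall x0 : A, (N (P x0)) = (I (P x0) e).
Proof.
  intros x0.
  refine (eq_trans (f_equal (fun Z => (N Z)) (eq_sym (A5a x0))) _).
  refine (eq_trans (A8 e (P x0)) _).
  reflexivity.
Qed.

Lemma L_P1_170396 (c_a : A) : (N one) = (I one e).
Proof.
  refine (eq_trans (L_P1_170389 c_a) _).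
  reflexivity.
Qed.

Lemma L_P1_170397 (c_a : A) : (I (N one) one) = one.
Proof.
  refine (eq_trans (f_equal (fun Z => (I Z one)) (L_P1_170396 c_a)) _).
  refine (eq_trans (A3 e) _).
  reflexivity.
Qed.

Lemma L_P1_170399 (c_a : A) : (I (N one) one) = one.
Proof.
  refine (eq_trans (L_P1_170397 c_a) _).
  reflexivity.
Qed.

Lemma L_P1_170414 (c_a : A) : forall x0 : A, (N one) = (I one (I one x0)).
Proof.
  intros x0.
  refine (eq_trans ((L_P1_170388 c_a) x0) _).
  reflexivity.
Qed.

Lemma L_P1_170422 (c_a : A) : forall x0 : A, (N (P x0)) = (I (P x0) e).
Proof.
  intros x0.
  refine (eq_trans ((L_P1_170390 c_a) x0) _).
  reflexivity.
Qed.

Lemma L_P1_170433 (c_a : A) : forall x0 x1 : A, (I x0 (N x1)) = (I x1 (N x0)).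
Proof.
  intros x0 x1.
  refine (eq_trans (f_equal (fun Z => (I Z (N x1))) (eq_sym (A9 x0))) _).
  refine (eq_trans (eq_sym (A1 x1 (N x0))) _).
  reflexivity.
Qed.

Lemma L_P1_170469 (c_a : A) : forall x0 : A, (I (P x0) one) = (P (I x0 one)).
Proof.
  intros x0.
  refine (eq_trans ((L_P1_170381 c_a) x0) _).
  reflexivity.
Qed.

Lemma L_P1_170535 (c_a : A) : forall x0 x1 : A, (I x0 (N x1)) = (I x1 (N x0)).
Proof.
  intros x0 x1.
  refine (eq_trans ((L_P1_170433 c_a) x0 x1) _).
  reflexivity.
Qed.

Lemma L_P1_170676 (c_a : A) : forall x0 : A, (I one (I (N one) x0)) = (M x0).
Proof.
  intros x0.
  refine (eq_trans (f_equal (fun Z => (I one Z)) (eq_sym (A8 x0 (N one)))) _).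
  refine (eq_trans (eq_sym ((L_P1_170535 c_a) (I x0 (N one)) one)) _).
  refine (eq_trans (DM x0) _).
  reflexivity.
Qed.

Lemma L_P1_170678 (c_a : A) : (I one one) = (M one).
Proof.
  refine (eq_trans (f_equal (fun Z => (I one Z)) (eq_sym (L_P1_170399 c_a))) _).
  refine (eq_trans ((L_P1_170676 c_a) one) _).
  reflexivity.
Qed.

Lemma L_P1_170692 (c_a : A) : forall x0 : A, (I one (M x0)) = (N one).
Proof.
  intros x0.
  refine (eq_trans (f_equal (fun Z => (I one Z)) (eq_sym ((L_P1_170676 c_a) x0))) _).
  refine (eq_trans (eq_sym ((L_P1_170414 c_a) (I (N one) x0))) _).
  reflexivity.
Qed.

Lemma L_P1_170705 (c_a : A) : e = (M one).
Proof.
  refine (eq_trans (eq_sym (L_qq one)) _).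
  refine (eq_trans (L_P1_170678 c_a) _).
  reflexivity.
Qed.

Lemma L_P1_170743 (c_a : A) : forall x0 : A, (I one (M x0)) = (N one).
Proof.
  intros x0.
  refine (eq_trans ((L_P1_170692 c_a) x0) _).
  reflexivity.
Qed.

Lemma L_P1_321607 (c_a : A) : forall x0 : A, (I (I one (M x0)) (I (P x0) (M one))) = (I x0 one).
Proof.
  intros x0.
  refine (eq_trans (f_equal (fun Z => (I (I Z (M x0)) (I (P x0) (M one)))) (L_P1_170383 c_a)) _).
  refine (eq_trans (eq_sym (A7 x0 one)) _).
  reflexivity.
Qed.

Lemma L_P1_322545 (c_a : A) : forall x0 : A, (I (P x0) one) = (I x0 one).
Proof.
  intros x0.
  refine (eq_trans (A1 (P x0) one) _).
  refine (eq_trans (f_equal (fun Z => (I (N one) Z)) ((L_P1_170422 c_a) x0)) _).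
  refine (eq_trans (f_equal (fun Z => (I (N one) (I (P x0) Z))) (L_P1_170705 c_a)) _).
  refine (eq_trans (f_equal (fun Z => (I Z (I (P x0) (M one)))) (eq_sym ((L_P1_170743 c_a) x0))) _).
  refine (eq_trans ((L_P1_321607 c_a) x0) _).
  reflexivity.
Qed.

Lemma L_P1 (c_a : A) : (P (I c_a one)) = (I c_a one).
Proof.
  refine (eq_trans (eq_sym ((L_P1_170469 c_a) c_a)) _).
  refine (eq_trans ((L_P1_322545 c_a) c_a) _).
  reflexivity.
Qed.

Lemma L_P1_f : forall x0 : A, (P (I x0 one)) = (I x0 one).
Proof. intros; exact (L_P1 x0). Qed.

Lemma L_MP_322905 (c_a : A) : forall x0 : A, (N (P x0)) = (I one (I x0 one)).
Proof.
  intros x0.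
  refine (eq_trans (f_equal (fun Z => (N Z)) (eq_sym (DP x0))) _).
  refine (eq_trans (A8 (I x0 one) one) _).
  reflexivity.
Qed.

Lemma L_MP_322957 (c_a : A) : forall x0 x1 : A, (I x0 (N x1)) = (I x1 (N x0)).
Proof.
  intros x0 x1.
  refine (eq_trans (f_equal (fun Z => (I Z (N x1))) (eq_sym (A9 x0))) _).
  refine (eq_trans (eq_sym (A1 x1 (N x0))) _).
  reflexivity.
Qed.

Lemma L_MP_322958 (c_a : A) : forall x0 x1 : A, (I (N x0) x1) = (I (N x1) x0).
Proof.
  intros x0 x1.
  refine (eq_trans (f_equal (fun Z => (I (N x0) Z)) (eq_sym (A9 x1))) _).
  refine (eq_trans (eq_sym (A1 (N x1) x0)) _).
  reflexivity.
Qed.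

Lemma L_MP_323001 (c_a : A) : forall x0 : A, (N (P x0)) = (I one (I x0 one)).
Proof.
  intros x0.
  refine (eq_trans ((L_MP_322905 c_a) x0) _).
  reflexivity.
Qed.

Lemma L_MP_323009 (c_a : A) : forall x0 : A, (I (N (P x0)) one) = one.
Proof.
  intros x0.
  refine (eq_trans (f_equal (fun Z => (I Z one)) ((L_MP_323001 c_a) x0)) _).
  refine (eq_trans (A3 (I x0 one)) _).
  reflexivity.
Qed.

Lemma L_MP_323028 (c_a : A) : forall x0 : A, (I (N (P x0)) one) = one.
Proof.
  intros x0.
  refine (eq_trans ((L_MP_323009 c_a) x0) _).
  reflexivity.
Qed.

Lemma L_MP_323056 (c_a : A) : forall x0 x1 : A, (I x0 (N x1)) = (I x1 (N x0)).
Proof.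
  intros x0 x1.
  refine (eq_trans ((L_MP_322957 c_a) x0 x1) _).
  reflexivity.
Qed.

Lemma L_MP_323118 (c_a : A) : forall x0 x1 : A, (I (N x0) x1) = (I (N x1) x0).
Proof.
  intros x0 x1.
  refine (eq_trans ((L_MP_322958 c_a) x0 x1) _).
  reflexivity.
Qed.

Lemma L_MP_323161 (c_a : A) : forall x0 : A, (I (N one) (P x0)) = one.
Proof.
  intros x0.
  refine (eq_trans (eq_sym ((L_MP_323118 c_a) (P x0) one)) _).
  refine (eq_trans ((L_MP_323028 c_a) x0) _).
  reflexivity.
Qed.

Lemma L_MP_323221 (c_a : A) : forall x0 : A, (I one (I (N one) x0)) = (M x0).
Proof.
  intros x0.
  refine (eq_trans (f_equal (fun Z => (I one Z)) (eq_sym (A8 x0 (N one)))) _).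
  refine (eq_trans (eq_sym ((L_MP_323056 c_a) (I x0 (N one)) one)) _).
  refine (eq_trans (DM x0) _).
  reflexivity.
Qed.

Lemma L_MP_323231 (c_a : A) : forall x0 : A, (I one one) = (M (P x0)).
Proof.
  intros x0.
  refine (eq_trans (f_equal (fun Z => (I one Z)) (eq_sym ((L_MP_323161 c_a) x0))) _).
  refine (eq_trans ((L_MP_323221 c_a) (P x0)) _).
  reflexivity.
Qed.

Lemma L_MP_323270 (c_a : A) : forall x0 : A, e = (M (P x0)).
Proof.
  intros x0.
  refine (eq_trans (eq_sym (L_qq one)) _).
  refine (eq_trans ((L_MP_323231 c_a) x0) _).
  reflexivity.
Qed.

Lemma L_MP (c_a : A) : (M (P c_a)) = e.
Proof.
  refine (eq_trans (eq_sym ((L_MP_323270 c_a) c_a)) _).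
  reflexivity.
Qed.

Lemma L_MP_f : forall x0 : A, (M (P x0)) = e.
Proof. intros; exact (L_MP x0). Qed.

Lemma L_NP_53 (c_a : A) : forall x0 : A, (N (P x0)) = (I one (I x0 one)).
Proof.
  intros x0.
  refine (eq_trans (f_equal (fun Z => (N Z)) (eq_sym (DP x0))) _).
  refine (eq_trans (A8 (I x0 one) one) _).
  reflexivity.
Qed.

Lemma L_NP_121 (c_a : A) : forall x0 x1 : A, (I x0 (N x1)) = (I x1 (N x0)).
Proof.
  intros x0 x1.
  refine (eq_trans (f_equal (fun Z => (I Z (N x1))) (eq_sym (A9 x0))) _).
  refine (eq_trans (eq_sym (A1 x1 (N x0))) _).
  reflexivity.
Qed.

Lemma L_NP_167 (c_a : A) : forall x0 : A, (N (P x0)) = (I one (I x0 one)).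
Proof.
  intros x0.
  refine (eq_trans ((L_NP_53 c_a) x0) _).
  reflexivity.
Qed.

Lemma L_NP_224 (c_a : A) : forall x0 x1 : A, (I x0 (N x1)) = (I x1 (N x0)).
Proof.
  intros x0 x1.
  refine (eq_trans ((L_NP_121 c_a) x0 x1) _).
  reflexivity.
Qed.

Lemma L_NP_409 (c_a : A) : forall x0 : A, (I one (I (N one) x0)) = (M x0).
Proof.
  intros x0.
  refine (eq_trans (f_equal (fun Z => (I one Z)) (eq_sym (A8 x0 (N one)))) _).
  refine (eq_trans (eq_sym ((L_NP_224 c_a) (I x0 (N one)) one)) _).
  refine (eq_trans (DM x0) _).
  reflexivity.
Qed.

Lemma L_NP_412 (c_a : A) : forall x0 : A, (I one (I x0 one)) = (M (N x0)).
Proof.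
  intros x0.
  refine (eq_trans (f_equal (fun Z => (I one Z)) (A1 x0 one)) _).
  refine (eq_trans ((L_NP_409 c_a) (N x0)) _).
  reflexivity.
Qed.

Lemma L_NP_478 (c_a : A) : forall x0 : A, (N (P x0)) = (M (N x0)).
Proof.
  intros x0.
  refine (eq_trans ((L_NP_167 c_a) x0) _).
  refine (eq_trans ((L_NP_412 c_a) x0) _).
  reflexivity.
Qed.

Lemma L_NP_479 (c_a : A) : forall x0 : A, (M x0) = (N (P (N x0))).
Proof.
  intros x0.
  refine (eq_trans (f_equal (fun Z => (M Z)) (eq_sym (A9 x0))) _).
  refine (eq_trans (eq_sym ((L_NP_478 c_a) (N x0))) _).
  reflexivity.
Qed.

Lemma L_NP_487 (c_a : A) : forall x0 : A, (M x0) = (N (P (N x0))).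
Proof.
  intros x0.
  refine (eq_trans ((L_NP_479 c_a) x0) _).
  reflexivity.
Qed.

Lemma L_NP_494 (c_a : A) : forall x0 : A, (N (M x0)) = (P (N x0)).
Proof.
  intros x0.
  refine (eq_trans (f_equal (fun Z => (N Z)) ((L_NP_487 c_a) x0)) _).
  refine (eq_trans (A9 (P (N x0))) _).
  reflexivity.
Qed.

Lemma L_NP_506 (c_a : A) : forall x0 : A, (N (M x0)) = (P (N x0)).
Proof.
  intros x0.
  refine (eq_trans ((L_NP_494 c_a) x0) _).
  reflexivity.
Qed.

Lemma L_NP (c_a : A) : (P (N c_a)) = (N (M c_a)).
Proof.
  refine (eq_trans (eq_sym ((L_NP_506 c_a) c_a)) _).
  reflexivity.
Qed.

Lemma L_NP_f : forall x0 : A, (P (N x0)) = (N (M x0)).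
Proof. intros; exact (L_NP x0). Qed.

Lemma L_Pe_543 : (I e one) = one.
Proof.
  refine (eq_trans (f_equal (fun Z => (I Z one)) (eq_sym (L_qq one))) _).
  refine (eq_trans (A3 one) _).
  reflexivity.
Qed.

Lemma L_Pe_544 : (I e one) = one.
Proof.
  refine (eq_trans L_Pe_543 _).
  reflexivity.
Qed.

Lemma L_Pe_551 : forall x0 : A, (P x0) = (N (M (N x0))).
Proof.
  intros x0.
  refine (eq_trans (f_equal (fun Z => (P Z)) (eq_sym (A9 x0))) _).
  refine (eq_trans (L_NP (N x0)) _).
  reflexivity.
Qed.

Lemma L_Pe_552 : forall x0 : A, (M (N (M x0))) = e.
Proof.
  intros x0.
  refine (eq_trans (f_equal (fun Z => (M Z)) (eq_sym (L_NP x0))) _).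
  refine (eq_trans (L_MP (N x0)) _).
  reflexivity.
Qed.

Lemma L_Pe_555 : forall x0 : A, (M (N (M x0))) = e.
Proof.
  intros x0.
  refine (eq_trans (L_Pe_552 x0) _).
  reflexivity.
Qed.

Lemma L_Pe_556 : (M (N e)) = e.
Proof.
  refine (eq_trans (f_equal (fun Z => (M (N Z))) (eq_sym (L_MP one))) _).
  refine (eq_trans (L_Pe_555 (P one)) _).
  reflexivity.
Qed.

Lemma L_Pe_560 : (M (N e)) = e.
Proof.
  refine (eq_trans L_Pe_556 _).
  reflexivity.
Qed.

Lemma L_Pe_563 : forall x0 : A, (P x0) = (N (M (N x0))).
Proof.
  intros x0.
  refine (eq_trans (L_Pe_551 x0) _).
  reflexivity.
Qed.

Lemma L_Pe_566 : (N e) = (P e).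
Proof.
  refine (eq_trans (f_equal (fun Z => (N Z)) (eq_sym L_Pe_560)) _).
  refine (eq_trans (eq_sym (L_Pe_563 e)) _).
  reflexivity.
Qed.

Lemma L_Pe_571 : (N e) = (P e).
Proof.
  refine (eq_trans L_Pe_566 _).
  reflexivity.
Qed.

Lemma L_Pe_600 : (I one one) = (P e).
Proof.
  refine (eq_trans (f_equal (fun Z => (I Z one)) (eq_sym L_Pe_544)) _).
  refine (eq_trans (DP e) _).
  reflexivity.
Qed.

Lemma L_Pe_609 : e = (N e).
Proof.
  refine (eq_trans (eq_sym (L_qq one)) _).
  refine (eq_trans L_Pe_600 _).
  refine (eq_trans (eq_sym L_Pe_571) _).
  reflexivity.
Qed.

Lemma L_Pe : (P e) = e.
Proof.
  refine (eq_trans (eq_sym L_Pe_571) _).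
  refine (eq_trans (eq_sym L_Pe_609) _).
  reflexivity.
Qed.

Lemma L_Pe_f : (P e) = e.
Proof. intros; exact (L_Pe ). Qed.

Lemma L_Me_638 : (M e) = e.
Proof.
  refine (eq_trans (f_equal (fun Z => (M Z)) (eq_sym L_Pe)) _).
  refine (eq_trans (L_MP e) _).
  reflexivity.
Qed.

Lemma L_Me_639 : (M e) = e.
Proof.
  refine (eq_trans L_Me_638 _).
  reflexivity.
Qed.

Lemma L_Me : (M e) = e.
Proof.
  refine (eq_trans L_Me_639 _).
  reflexivity.
Qed.

Lemma L_Me_f : (M e) = e.
Proof. intros; exact (L_Me ). Qed.

Lemma L_Ne_678 : forall x0 : A, (P x0) = (N (M (N x0))).
Proof.
  intros x0.
  refine (eq_trans (f_equal (fun Z => (P Z)) (eq_sym (A9 x0))) _).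
  refine (eq_trans (L_NP (N x0)) _).
  reflexivity.
Qed.

Lemma L_Ne_679 : forall x0 : A, (M (N (M x0))) = e.
Proof.
  intros x0.
  refine (eq_trans (f_equal (fun Z => (M Z)) (eq_sym (L_NP x0))) _).
  refine (eq_trans (L_MP (N x0)) _).
  reflexivity.
Qed.

Lemma L_Ne_682 : forall x0 : A, (M (N (M x0))) = e.
Proof.
  intros x0.
  refine (eq_trans (L_Ne_679 x0) _).
  reflexivity.
Qed.

Lemma L_Ne_683 : (M (N e)) = e.
Proof.
  refine (eq_trans (f_equal (fun Z => (M (N Z))) (eq_sym L_Me)) _).
  refine (eq_trans (L_Ne_682 e) _).
  reflexivity.
Qed.

Lemma L_Ne_688 : (M (N e)) = e.
Proof.
  refine (eq_trans L_Ne_683 _).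
  reflexivity.
Qed.

Lemma L_Ne_691 : forall x0 : A, (P x0) = (N (M (N x0))).
Proof.
  intros x0.
  refine (eq_trans (L_Ne_678 x0) _).
  reflexivity.
Qed.

Lemma L_Ne_694 : (N e) = (P e).
Proof.
  refine (eq_trans (f_equal (fun Z => (N Z)) (eq_sym L_Ne_688)) _).
  refine (eq_trans (eq_sym (L_Ne_691 e)) _).
  reflexivity.
Qed.

Lemma L_Ne_699 : (N e) = e.
Proof.
  refine (eq_trans L_Ne_694 _).
  refine (eq_trans L_Pe _).
  reflexivity.
Qed.

Lemma L_Ne : (N e) = e.
Proof.
  refine (eq_trans L_Ne_699 _).
  reflexivity.
Qed.

Lemma L_Ne_f : (N e) = e.
Proof. intros; exact (L_Ne ). Qed.

Lemma L_Pimpe_790 (c_a : A) : forall x0 : A, (N (P x0)) = (I (P x0) e).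
Proof.
  intros x0.
  refine (eq_trans (f_equal (fun Z => (N Z)) (eq_sym (A5a x0))) _).
  refine (eq_trans (A8 e (P x0)) _).
  reflexivity.
Qed.

Lemma L_Pimpe_850 (c_a : A) : forall x0 : A, (N (P x0)) = (I (P x0) e).
Proof.
  intros x0.
  refine (eq_trans ((L_Pimpe_790 c_a) x0) _).
  reflexivity.
Qed.

Lemma L_Pimpe (c_a : A) : (I (P c_a) e) = (N (P c_a)).
Proof.
  refine (eq_trans (eq_sym ((L_Pimpe_850 c_a) c_a)) _).
  reflexivity.
Qed.

Lemma L_Pimpe_f : forall x0 : A, (I (P x0) e) = (N (P x0)).
Proof. intros; exact (L_Pimpe x0). Qed.

Lemma L_Neimp_1035 (c_a : A) : forall x0 : A, (I (N x0) e) = (I e x0).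
Proof.
  intros x0.
  refine (eq_trans (f_equal (fun Z => (I (N x0) Z)) (eq_sym L_Ne)) _).
  refine (eq_trans (eq_sym (A1 e x0)) _).
  reflexivity.
Qed.

Lemma L_Neimp_1049 (c_a : A) : forall x0 : A, (I (N x0) e) = (I e x0).
Proof.
  intros x0.
  refine (eq_trans ((L_Neimp_1035 c_a) x0) _).
  reflexivity.
Qed.

Lemma L_Neimp (c_a : A) : (I (N c_a) e) = (I e c_a).
Proof.
  refine (eq_trans ((L_Neimp_1049 c_a) c_a) _).
  reflexivity.
Qed.

Lemma L_Neimp_f : forall x0 : A, (I (N x0) e) = (I e x0).
Proof. intros; exact (L_Neimp x0). Qed.

Lemma L_Je_raw_43 (c_a : A) : forall x0 : A, (P x0) = (N (M (N x0))).
Proof.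
  intros x0.
  refine (eq_trans (f_equal (fun Z => (P Z)) (eq_sym (A9 x0))) _).
  refine (eq_trans (L_NP_f (N x0)) _).
  reflexivity.
Qed.

Lemma L_Je_raw_44 (c_a : A) : forall x0 : A, (M (N (M x0))) = e.
Proof.
  intros x0.
  refine (eq_trans (f_equal (fun Z => (M Z)) (eq_sym (L_NP_f x0))) _).
  refine (eq_trans (L_MP_f (N x0)) _).
  reflexivity.
Qed.

Lemma L_Je_raw_47 (c_a : A) : forall x0 : A, (M (N (M x0))) = e.
Proof.
  intros x0.
  refine (eq_trans ((L_Je_raw_44 c_a) x0) _).
  reflexivity.
Qed.

Lemma L_Je_raw_53 (c_a : A) : forall x0 : A, (P x0) = (N (M (N x0))).
Proof.
  intros x0.
  refine (eq_trans ((L_Je_raw_43 c_a) x0) _).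
  reflexivity.
Qed.

Lemma L_Je_raw_56 (c_a : A) : forall x0 : A, (N e) = (P (M x0)).
Proof.
  intros x0.
  refine (eq_trans (f_equal (fun Z => (N Z)) (eq_sym ((L_Je_raw_47 c_a) x0))) _).
  refine (eq_trans (eq_sym ((L_Je_raw_53 c_a) (M x0))) _).
  reflexivity.
Qed.

Lemma L_Je_raw_58 (c_a : A) : forall x0 : A, (N (P x0)) = (M (N x0)).
Proof.
  intros x0.
  refine (eq_trans (f_equal (fun Z => (N Z)) ((L_Je_raw_53 c_a) x0)) _).
  refine (eq_trans (A9 (M (N x0))) _).
  reflexivity.
Qed.

Lemma L_Je_raw_61 (c_a : A) : forall x0 : A, e = (P (M x0)).
Proof.
  intros x0.
  refine (eq_trans (eq_sym L_Ne_f) _).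
  refine (eq_trans ((L_Je_raw_56 c_a) x0) _).
  reflexivity.
Qed.

Lemma L_Je_raw_69 (c_a : A) : forall x0 : A, (N (P x0)) = (M (N x0)).
Proof.
  intros x0.
  refine (eq_trans ((L_Je_raw_58 c_a) x0) _).
  reflexivity.
Qed.

Lemma L_Je_raw_90 (c_a : A) : forall x0 : A, (N (M x0)) = (I (M x0) e).
Proof.
  intros x0.
  refine (eq_trans (f_equal (fun Z => (N Z)) (eq_sym (A6a x0))) _).
  refine (eq_trans (A8 e (M x0)) _).
  reflexivity.
Qed.

Lemma L_Je_raw_162 (c_a : A) : forall x0 : A, (N (M x0)) = (I (M x0) e).
Proof.
  intros x0.
  refine (eq_trans ((L_Je_raw_90 c_a) x0) _).
  reflexivity.
Qed.

Lemma L_Je_raw (c_a : A) : (I (I (P (I (P e) (P c_a))) (M (N e))) (I (M (I (M c_a) (M e))) (M e))) = (P c_a).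
Proof.
  refine (eq_trans (f_equal (fun Z => (I (I (P (I Z (P c_a))) (M (N e))) (I (M (I (M c_a) (M e))) (M e)))) L_Pe_f) _).
  refine (eq_trans (f_equal (fun Z => (I (I (P Z) (M (N e))) (I (M (I (M c_a) (M e))) (M e)))) (A5a c_a)) _).
  refine (eq_trans (f_equal (fun Z => (I (I Z (M (N e))) (I (M (I (M c_a) (M e))) (M e)))) (L_PP_f c_a)) _).
  refine (eq_trans (f_equal (fun Z => (I (I (P c_a) (M Z)) (I (M (I (M c_a) (M e))) (M e)))) L_Ne_f) _).
  refine (eq_trans (f_equal (fun Z => (I (I (P c_a) Z) (I (M (I (M c_a) (M e))) (M e)))) L_Me_f) _).
  refine (eq_trans (f_equal (fun Z => (I Z (I (M (I (M c_a) (M e))) (M e)))) (L_Pimpe_f c_a)) _).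
  refine (eq_trans (f_equal (fun Z => (I (N (P c_a)) (I (M (I (M c_a) Z)) (M e)))) L_Me_f) _).
  refine (eq_trans (f_equal (fun Z => (I (N (P c_a)) (I (M Z) (M e)))) (eq_sym ((L_Je_raw_162 c_a) c_a))) _).
  refine (eq_trans (f_equal (fun Z => (I (N (P c_a)) (I Z (M e)))) (eq_sym ((L_Je_raw_69 c_a) (M c_a)))) _).
  refine (eq_trans (f_equal (fun Z => (I (N (P c_a)) (I (N Z) (M e)))) (eq_sym ((L_Je_raw_61 c_a) c_a))) _).
  refine (eq_trans (f_equal (fun Z => (I (N (P c_a)) (I Z (M e)))) L_Ne_f) _).
  refine (eq_trans (f_equal (fun Z => (I (N (P c_a)) (I e Z))) L_Me_f) _).
  refine (eq_trans (f_equal (fun Z => (I (N (P c_a)) Z)) (L_qq_f e)) _).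
  refine (eq_trans (L_Neimp_f (P c_a)) _).
  refine (eq_trans (A5a c_a) _).
  reflexivity.
Qed.

Lemma L_Je : forall x0 : A, (J e x0) = (P x0).
Proof. intros; rewrite ?joinE; exact (L_Je_raw x0). Qed.

Lemma L_reg : forall x0 x1 : A, (I (I e x0) (I e x1)) = (I x0 x1).
Proof. intros. rewrite (A7 (I e x0) (I e x1)), !A5b, !A6b. symmetry. apply A7. Qed.

Lemma L_ee : forall x0 : A, (I e (I e x0)) = (I e x0).
Proof. intros. exact (A4 e x0 one). Qed.

Lemma L_eimp : forall x0 x1 : A, (I e (I x0 x1)) = (I x0 x1).
Proof. intros. exact (A4 x0 x1 one). Qed.

Lemma L_Mimpe_226 (c_a : A) : forall x0 : A, (P x0) = (N (M (N x0))).
Proof.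
  intros x0.
  refine (eq_trans (f_equal (fun Z => (P Z)) (eq_sym (A9 x0))) _).
  refine (eq_trans (L_NP_f (N x0)) _).
  reflexivity.
Qed.

Lemma L_Mimpe_236 (c_a : A) : forall x0 : A, (P x0) = (N (M (N x0))).
Proof.
  intros x0.
  refine (eq_trans ((L_Mimpe_226 c_a) x0) _).
  reflexivity.
Qed.

Lemma L_Mimpe_241 (c_a : A) : forall x0 : A, (N (P x0)) = (M (N x0)).
Proof.
  intros x0.
  refine (eq_trans (f_equal (fun Z => (N Z)) ((L_Mimpe_236 c_a) x0)) _).
  refine (eq_trans (A9 (M (N x0))) _).
  reflexivity.
Qed.

Lemma L_Mimpe_252 (c_a : A) : forall x0 : A, (N (P x0)) = (M (N x0)).
Proof.
  intros x0.
  refine (eq_trans ((L_Mimpe_241 c_a) x0) _).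
  reflexivity.
Qed.

Lemma L_Mimpe_314 (c_a : A) : forall x0 : A, (I x0 e) = (I e (N x0)).
Proof.
  intros x0.
  refine (eq_trans (f_equal (fun Z => (I Z e)) (eq_sym (A9 x0))) _).
  refine (eq_trans (L_Neimp_f (N x0)) _).
  reflexivity.
Qed.

Lemma L_Mimpe_353 (c_a : A) : forall x0 : A, (I x0 e) = (I e (N x0)).
Proof.
  intros x0.
  refine (eq_trans ((L_Mimpe_314 c_a) x0) _).
  reflexivity.
Qed.

Lemma L_Mimpe_358 (c_a : A) : forall x0 : A, (M (I x0 e)) = (M (N x0)).
Proof.
  intros x0.
  refine (eq_trans (f_equal (fun Z => (M Z)) ((L_Mimpe_353 c_a) x0)) _).
  refine (eq_trans (A6b (N x0)) _).
  reflexivity.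
Qed.

Lemma L_Mimpe_383 (c_a : A) : forall x0 : A, (M (I x0 e)) = (N (P x0)).
Proof.
  intros x0.
  refine (eq_trans ((L_Mimpe_358 c_a) x0) _).
  refine (eq_trans (eq_sym ((L_Mimpe_252 c_a) x0)) _).
  reflexivity.
Qed.

Lemma L_Mimpe (c_a : A) : (M (I c_a e)) = (M (N c_a)).
Proof.
  refine (eq_trans ((L_Mimpe_383 c_a) c_a) _).
  refine (eq_trans ((L_Mimpe_252 c_a) c_a) _).
  reflexivity.
Qed.

Lemma L_Mimpe_f : forall x0 : A, (M (I x0 e)) = (M (N x0)).
Proof. intros; exact (L_Mimpe x0). Qed.

Lemma L_JeL : forall x0 x1 : A, (J (I e x0) x1) = (J x0 x1).
Proof. intros. rewrite !joinE, !A5b, !A6b, A8, L_Mimpe_f. reflexivity. Qed.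

Lemma L_JeR : forall x0 x1 : A, (J x0 (I e x1)) = (J x0 x1).
Proof. intros. rewrite !joinE, !A5b, !A6b. reflexivity. Qed.

Lemma L_N1_434 : (I e one) = one.
Proof.
  refine (eq_trans (f_equal (fun Z => (I Z one)) (eq_sym (L_qq_f one))) _).
  refine (eq_trans (A3 one) _).
  reflexivity.
Qed.

Lemma L_N1_435 : (I e one) = one.
Proof.
  refine (eq_trans L_N1_434 _).
  reflexivity.
Qed.

Lemma L_N1_499 : (N one) = (I one e).
Proof.
  refine (eq_trans (f_equal (fun Z => (N Z)) (eq_sym L_N1_435)) _).
  refine (eq_trans (A8 e one) _).
  reflexivity.
Qed.

Lemma L_N1_506 : (N one) = (I one e).
Proof.
  refine (eq_trans L_N1_499 _).
  reflexivity.
Qed.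

Lemma L_N1 : (I one e) = (N one).
Proof.
  refine (eq_trans (eq_sym L_N1_506) _).
  reflexivity.
Qed.

Lemma L_N1_f : (I one e) = (N one).
Proof. intros; exact (L_N1 ). Qed.

Lemma L_dec : forall x0 : A, (I e x0) = (I (N (P x0)) (M x0)).
Proof. intros. rewrite (A7 e x0), L_Me, L_Pe, L_Pimpe_f, A6a. reflexivity. Qed.

Lemma L_MN : forall x0 : A, (M (N x0)) = (N (P x0)).
Proof. intros. rewrite <- (A9 (M (N x0))), <- L_NP_f, A9. reflexivity. Qed.

Lemma L_Mdef : forall x0 : A, (M x0) = (N (P (N x0))).
Proof. intros. rewrite L_NP_f, A9. reflexivity. Qed.

Lemma L_ID1 : forall x0 x1 : A, (I (I (P x0) (P x1)) (N (P x0))) = (N (P x1)).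
Proof. intros. rewrite (A1 (I (P x0) (P x1)) (N (P x0))), A9, A8. rewrite (A2 (I x0 one) (I x1 one) (P x0)). rewrite (L_qq_f (P x0)), L_Pimpe_f. reflexivity. Qed.

Lemma Flat_45 (c_p : A) (H0 : (P c_p) = c_p) (H1 : (P (N one)) = (N one)) : (M c_p) = e.
Proof.
  refine (eq_trans (f_equal (fun Z => (M Z)) (eq_sym H0)) _).
  refine (eq_trans (L_MP_f c_p) _).
  reflexivity.
Qed.

Lemma Flat_46 (c_p : A) (H0 : (P c_p) = c_p) (H1 : (P (N one)) = (N one)) : (M c_p) = e.
Proof.
  refine (eq_trans (Flat_45 c_p H0 H1) _).
  reflexivity.
Qed.

Lemma Flat_48 (c_p : A) (H0 : (P c_p) = c_p) (H1 : (P (N one)) = (N one)) : (M (N one)) = e.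
Proof.
  refine (eq_trans (f_equal (fun Z => (M Z)) (eq_sym H1)) _).
  refine (eq_trans (L_MP_f (N one)) _).
  reflexivity.
Qed.

Lemma Flat_49 (c_p : A) (H0 : (P c_p) = c_p) (H1 : (P (N one)) = (N one)) : (M (N one)) = e.
Proof.
  refine (eq_trans (Flat_48 c_p H0 H1) _).
  reflexivity.
Qed.

Lemma Flat_55 (c_p : A) (H0 : (P c_p) = c_p) (H1 : (P (N one)) = (N one)) : (I e c_p) = (P c_p).
Proof.
  refine (eq_trans (f_equal (fun Z => (I e Z)) (eq_sym H0)) _).
  refine (eq_trans (A5a c_p) _).
  reflexivity.
Qed.

Lemma Flat_58 (c_p : A) (H0 : (P c_p) = c_p) (H1 : (P (N one)) = (N one)) : (I e c_p) = c_p.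
Proof.
  refine (eq_trans (Flat_55 c_p H0 H1) _).
  refine (eq_trans H0 _).
  reflexivity.
Qed.

Lemma Flat_99 (c_p : A) (H0 : (P c_p) = c_p) (H1 : (P (N one)) = (N one)) : (N (P one)) = e.
Proof.
  refine (eq_trans (eq_sym (L_MN one)) _).
  refine (eq_trans (Flat_49 c_p H0 H1) _).
  reflexivity.
Qed.

Lemma Flat_100 (c_p : A) (H0 : (P c_p) = c_p) (H1 : (P (N one)) = (N one)) : (N e) = (P one).
Proof.
  refine (eq_trans (f_equal (fun Z => (N Z)) (eq_sym (Flat_99 c_p H0 H1))) _).
  refine (eq_trans (A9 (P one)) _).
  reflexivity.
Qed.

Lemma Flat_103 (c_p : A) (H0 : (P c_p) = c_p) (H1 : (P (N one)) = (N one)) : e = (P one).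
Proof.
  refine (eq_trans (eq_sym L_Ne_f) _).
  refine (eq_trans (Flat_100 c_p H0 H1) _).
  reflexivity.
Qed.

Lemma Flat_128 (c_p : A) (H0 : (P c_p) = c_p) (H1 : (P (N one)) = (N one)) : one = (P one).
Proof.
  refine (eq_trans (eq_sym (A3 one)) _).
  refine (eq_trans (DP one) _).
  reflexivity.
Qed.

Lemma Flat_134 (c_p : A) (H0 : (P c_p) = c_p) (H1 : (P (N one)) = (N one)) : one = e.
Proof.
  refine (eq_trans (Flat_128 c_p H0 H1) _).
  refine (eq_trans (eq_sym (Flat_103 c_p H0 H1)) _).
  reflexivity.
Qed.

Lemma Flat_139 (c_p : A) (H0 : (P c_p) = c_p) (H1 : (P (N one)) = (N one)) : (I one c_p) = c_p.
Proof.
  refine (eq_trans (f_equal (fun Z => (I Z c_p)) (Flat_134 c_p H0 H1)) _).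
  refine (eq_trans (Flat_58 c_p H0 H1) _).
  reflexivity.
Qed.

Lemma Flat_140 (c_p : A) (H0 : (P c_p) = c_p) (H1 : (P (N one)) = (N one)) : (I c_p one) = one.
Proof.
  refine (eq_trans (f_equal (fun Z => (I Z one)) (eq_sym (Flat_139 c_p H0 H1))) _).
  refine (eq_trans (A3 c_p) _).
  reflexivity.
Qed.

Lemma Flat_141 (c_p : A) (H0 : (P c_p) = c_p) (H1 : (P (N one)) = (N one)) : (I c_p one) = one.
Proof.
  refine (eq_trans (Flat_140 c_p H0 H1) _).
  reflexivity.
Qed.

Lemma Flat_142 (c_p : A) (H0 : (P c_p) = c_p) (H1 : (P (N one)) = (N one)) : (I one one) = (P c_p).
Proof.
  refine (eq_trans (f_equal (fun Z => (I Z one)) (eq_sym (Flat_141 c_p H0 H1))) _).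
  refine (eq_trans (DP c_p) _).
  reflexivity.
Qed.

Lemma Flat_153 (c_p : A) (H0 : (P c_p) = c_p) (H1 : (P (N one)) = (N one)) : one = c_p.
Proof.
  refine (eq_trans (Flat_134 c_p H0 H1) _).
  refine (eq_trans (eq_sym (L_qq_f one)) _).
  refine (eq_trans (Flat_142 c_p H0 H1) _).
  refine (eq_trans H0 _).
  reflexivity.
Qed.

Lemma Flat (c_p : A) (H0 : (P c_p) = c_p) (H1 : (P (N one)) = (N one)) : (P (N c_p)) = (N c_p).
Proof.
  refine (eq_trans (L_NP_f c_p) _).
  refine (eq_trans (f_equal (fun Z => (N Z)) (Flat_46 c_p H0 H1)) _).
  refine (eq_trans (f_equal (fun Z => (N Z)) (eq_sym (Flat_134 c_p H0 H1))) _).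
  refine (eq_trans (f_equal (fun Z => (N Z)) (Flat_153 c_p H0 H1)) _).
  reflexivity.
Qed.
Lemma L_regR : forall a b : A, I a (I e b) = I a b.
Proof. intros. rewrite <- (L_reg a (I e b)), L_ee, L_reg. reflexivity. Qed.
Lemma L_regL : forall a b : A, I (I e a) b = I a b.
Proof. intros. rewrite <- (L_reg (I e a) b), L_ee, L_reg. reflexivity. Qed.

Lemma Mx_e_P : forall x, M x = e -> P x = I e x.
Proof. intros x H. rewrite (L_dec x), H, L_Neimp_f, A5a. reflexivity. Qed.
Lemma Px_e_M : forall x, P x = e -> M x = I e x.
Proof. intros x H. rewrite (L_dec x), H, L_Ne, A6a. reflexivity. Qed.

Lemma E1 : forall a b c : A, I (J a b) c = N (J (I c a) (I c b)).
Proof. intros. rewrite <- A13. symmetry. apply A8. Qed.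

Lemma E2 : forall a b : A, P (I (P b) (P a)) = P (I (P b) a).
Proof.
  intros.
  transitivity (P (I (P b) (J e a))). { rewrite L_Je. reflexivity. }
  rewrite A13, L_Pimpe_f.
  rewrite <- (L_Je (J (N (P b)) (I (P b) a))), A12, (L_Je (N (P b))).
  rewrite L_NP_f, L_MP_f, L_Ne, L_Je. reflexivity.
Qed.

Lemma MJ : forall x y : A, M y = e -> M (J x y) = e.
Proof.
  intros x y H.
  assert (Hy : I e y = P y) by (symmetry; apply Mx_e_P; exact H).
  rewrite <- (L_JeR x y), Hy, <- (L_Je y), A12, (A11 x e), <- A12, L_Je, L_MP_f.
  reflexivity.
Qed.

Lemma MONO : forall a b : A, M (I a b) = e -> P (I (P b) (P a)) = e.
Proof.
  intros a b H.
  rewrite E2, <- (L_Je b), E1, L_NP_f, (MJ _ _ H), L_Ne. reflexivity.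
Qed.

Lemma ID2 : forall a b : A, I (I (M b) (M a)) (M a) = M b.
Proof.
  intros. rewrite (L_Mdef a), (L_Mdef b), <- A1. exact (L_ID1 (N a) (N b)).
Qed.

Lemma CHARR : forall a b : A, P (I a b) = I a b -> J a b = I e b.
Proof.
  intros a b H.
  assert (HM : M (I a b) = e) by (rewrite <- H; apply L_MP_f).
  assert (HX : P (I (P a) (P b)) = I (P a) (P b)).
  { rewrite (Mx_e_P (I (P a) (P b))). apply L_eimp.
    rewrite <- (A8 (P b) (P a)), L_MN, (MONO a b HM), L_Ne. reflexivity. }
  assert (HY : M (I (M b) (M a)) = I (M b) (M a)).
  { rewrite (Px_e_M (I (M b) (M a))). apply L_eimp.
    rewrite (L_Mdef a), (L_Mdef b), <- A1. apply (MONO (N b) (N a)).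
    rewrite <- A1. exact HM. }
  rewrite joinE, HX, HY, L_MN, L_ID1, ID2.
  symmetry. apply L_dec.
Qed.

Lemma CHARL : forall a b : A, J a b = I e b -> P (I a b) = I a b.
Proof.
  intros a b H.
  transitivity (J (I a a) (I a b)). { rewrite (L_qq_f a). rewrite L_Je. reflexivity. }
  rewrite <- A13, H. apply L_regR.
Qed.

Lemma JTRANS : forall a b c : A, J a b = I e b -> J b c = I e c -> J a c = I e c.
Proof.
  intros a b c H1 H2.
  rewrite <- (L_JeR a c), <- H2, A12, H1, L_JeL. reflexivity.
Qed.

Definition good (x : A) : Prop := P x = x.

Lemma good_e : good e.
Proof. exact L_Pe. Qed.

Lemma good_eq : forall x y : A, x = y -> good (I x y).
Proof. intros x y H. subst y. unfold good. rewrite (L_qq_f x). exact L_Pe. Qed.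

Lemma good_qMP : forall p q : A, good (I e p) -> good (I p q) -> good (I e q).
Proof.
  unfold good. intros p q H1 H2.
  apply CHARL. apply (JTRANS e p q).
  - apply CHARR. exact H1.
  - apply CHARR. exact H2.
Qed.

Lemma good_R2 : forall p q r t : A, good (I p q) -> good (I r t) ->
  good (I (I q r) (I p t)).
Proof.
  unfold good. intros p q r t H1 H2.
  apply CHARL.
  apply (JTRANS _ (I p r)).
  - assert (H1' : J (N q) (N p) = I e (N p)).
    { apply CHARR. rewrite <- (A1 p q). exact H1. }
    rewrite (A1 q r), (A1 p r), <- A13, H1', L_regR, L_eimp. reflexivity.
  - assert (H2' : J r t = I e t) by (apply CHARR; exact H2).
    rewrite <- A13, H2', L_regR, L_eimp. reflexivity.
Qed.

Lemma good_R3 : forall p : A, good (I e p) -> good (M p).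
Proof.
  unfold good. intros p H.
  rewrite <- (A6b p), <- H, L_MP_f. exact L_Pe.
Qed.

Lemma good_Reg : forall p r : A, good p -> good (I (I r r) p).
Proof.
  unfold good. intros p r H. rewrite (L_qq_f r), <- H, A5a. exact (L_PP_f p).
Qed.
Lemma eval_join (V : Type) (ev : V -> A) (p q : form V) :
  eval A ev (fjoin p q) = J (eval A ev p) (eval A ev q).
Proof. rewrite joinE. reflexivity. Qed.

Lemma axiom_sound (V : Type) (ev : V -> A) (c : form V) :
  sqL_axiom c -> good (eval A ev c).
Proof.
  intros [p [q [r H]]]. unfold biax in H.
  destruct H as [[H|H]|[[H|H]|[[H|H]|[[H|H]|[[H|H]|[[H|H]|[[H|H]|[[H|H]|[H|H]]]]]]]]]; subst c.
  - cbn [eval]. apply good_eq. apply A1.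
  - cbn [eval]. apply good_eq. symmetry. apply A1.
  - cbn [eval]. apply good_eq. symmetry. apply A3.
  - cbn [eval]. apply good_eq. apply A3.
  - cbn [eval]. unfold good. rewrite (L_qq_f (eval A ev q)), L_regR, L_qq_f. exact L_Pe.
  - cbn [eval]. unfold good. rewrite (L_qq_f (eval A ev q)), L_regL, L_qq_f. exact L_Pe.
  - unfold fplus, fminus. cbn [eval]. apply good_eq. apply A7.
  - unfold fplus, fminus. cbn [eval]. apply good_eq. symmetry. apply A7.
  - cbn [eval]. apply good_eq. apply A8.
  - cbn [eval]. apply good_eq. symmetry. apply A8.
  - unfold fplus. cbn [eval]. apply good_eq. apply A10.
  - unfold fplus. cbn [eval]. apply good_eq. symmetry. apply A10.
  - cbn [eval]. rewrite !eval_join. apply good_eq. rewrite A13. apply A11.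
  - cbn [eval]. rewrite !eval_join. apply good_eq. rewrite A13. apply A11.
  - cbn [eval]. rewrite !eval_join. apply good_eq. apply A12.
  - cbn [eval]. rewrite !eval_join. apply good_eq. symmetry. apply A12.
  - cbn [eval]. apply good_eq. apply A2.
  - cbn [eval]. unfold good. apply L_P1_f.
Qed.

Lemma rule_sound (V : Type) (ev : V -> A) (ps : list (form V)) (c : form V) :
  sqL_rule ps c -> (forall x, In x ps -> good (eval A ev x)) -> good (eval A ev c).
Proof.
  intros Hr Hps. destruct Hr.
  - pose proof (Hps _ (or_introl eq_refl)) as H1.
    pose proof (Hps _ (or_intror (or_introl eq_refl))) as H2.
    cbn [eval] in *. rewrite L_qq_f in *. rewrite L_eimp in H2.
    exact (good_qMP _ _ H1 H2).
  - pose proof (Hps _ (or_introl eq_refl)) as H1. cbn [eval] in *.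
    apply good_Reg. exact H1.
  - pose proof (Hps _ (or_introl eq_refl)) as H1. cbn [eval] in *.
    rewrite A4 in H1. exact H1.
  - pose proof (Hps _ (or_introl eq_refl)) as H1. cbn [eval] in *.
    rewrite A8 in *. rewrite A4 in H1. exact H1.
  - pose proof (Hps _ (or_introl eq_refl)) as H1. cbn [eval] in *.
    rewrite <- L_N1 in *. rewrite A4 in H1. exact H1.
  - pose proof (Hps _ (or_introl eq_refl)) as H1. cbn [eval] in *.
    rewrite L_qq_f, (A3 one) in H1. exact H1.
  - pose proof (Hps _ (or_introl eq_refl)) as H1. cbn [eval] in *.
    unfold good. rewrite A9. exact H1.
  - pose proof (Hps _ (or_introl eq_refl)) as H1. cbn [eval] in *.
    unfold good in H1. rewrite A9 in H1. exact H1.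
  - pose proof (Hps _ (or_introl eq_refl)) as H1.
    pose proof (Hps _ (or_intror (or_introl eq_refl))) as H2.
    cbn [eval] in *. exact (Flat _ H1 H2).
  - pose proof (Hps _ (or_introl eq_refl)) as H1.
    pose proof (Hps _ (or_intror (or_introl eq_refl))) as H2.
    cbn [eval] in *. exact (good_R2 _ _ _ _ H1 H2).
  - pose proof (Hps _ (or_introl eq_refl)) as H1. cbn [eval] in *.
    unfold fminus. cbn [eval]. rewrite L_qq_f in H1. exact (good_R3 _ H1).
Qed.

End Alg.

Lemma last_nth_aux {T : Type} (l : list T) (d : T) :
  l <> [] -> last l d = nth (length l - 1) l d.
Proof.
  induction l as [|a l IH]; intros H; [congruence|].
  destruct l as [|b l']; [reflexivity|].
  change (last (a :: b :: l') d) with (last (b :: l') d).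
  rewrite IH by discriminate. cbn [length]. simpl. rewrite Nat.sub_0_r. reflexivity.
Qed.

Theorem theorem4p2 (V : Type) (hyps : list (form V)) (q : form V) :
  sqL_derives hyps q -> SQW_entails hyps q.
Proof.
  intros [l [Hne [Hder Hlast]]] A HA ev Hh.
  assert (Hg : forall i, i < length l -> good A (eval A ev (nth i l q))).
  { intro i. induction i as [i IH] using (well_founded_induction lt_wf). intro Hi.
    destruct (Hder i q Hi) as [Hax | [Hin | [ps [Hr Hps]]]].
    - apply (axiom_sound A HA). exact Hax.
    - destruct (Hh _ Hin) as [c Hc]. unfold good. rewrite Hc. apply (L_PP_f A HA).
    - apply (rule_sound A HA V ev ps _ Hr). intros x Hx. apply Hps in Hx.
      destruct (In_nth _ _ q Hx) as [n [Hn Hnx]].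
      rewrite length_firstn in Hn. rewrite nth_firstn in Hnx.
      assert (Hni : n < i) by lia.
      replace (n <? i) with true in Hnx by (symmetry; apply Nat.ltb_lt; exact Hni).
      subst x. apply IH; lia. }
  assert (Hlen : length l - 1 < length l).
  { destruct l; [congruence|]. cbn. lia. }
  specialize (Hg _ Hlen). rewrite <- last_nth_aux in Hg by exact Hne.
  rewrite Hlast in Hg. exists (eval A ev q). symmetry. exact Hg.
Qed.
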